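(* Let $\mathbb{K}$ be a finite reduced formal context. Then $\mathcal{CDB}(BC(\mathbb{K}))=\{A\to A^{\bullet}\mid A\to A^{\bullet}\in\mathcal{CDB}(\mathbb{K})\text{ and }|A|=1\}$, i.e. the canonical direct basis of the Birkhoff completion of $\mathbb{K}$ consists exactly of the implications of the canonical direct basis of $\mathbb{K}$ whose premise is a singleton.
   Context: For a formal context $(G,M,I)$, derivation: $A'=\{m\in M\mid\forall g\in A:(g,m)\in I\}$, $B'=\{g\in G\mid\forall m\in B:(g,m)\in I\}$. A context is reduced if no object $g$ has $\{g\}'=X'$ for some $X\subseteq G$ with $g\notin X$, and no attribute $m$ has $\{m\}'=X'$ for some $X\subseteq M$ with $m\notin X$. For $A\subseteq M$, $A^{\bullet}:=A''\setminus\big(A\cup\bigcup_{n\in A}(A\setminus\{n\})''\big)$; $A$ is a proper premise if $A^{\bullet}\ne\emptyset$. The canonical direct basis $\mathcal{CDB}(\mathbb{K})$ is the set of implications $A\to A^{\bullet}$ for all proper premises $A$ of $\mathbb{K}$ (with $A^\bullet$ computed in that context). For $m,n\in M$, $m\ge_{\mathbb{K}}n$ iff $\{m\}'\supseteq\{n\}'$. Let $\mathcal{M}(M)$ be the set of attributes whose attribute concept $(\{m\}',\{m\}'')$ is meet-irreducible in the concept lattice, and $\overline{\mathcal{M}(M)}=\{\overline m\mid m\in\mathcal{M}(M)\}$ new elements. The Birkhoff completion is $BC(\mathbb{K}):=\big(G\cup\overline{\mathcal{M}(M)},M,I\cup\{(\overline m,n)\in\overline{\mathcal{M}(M)}\times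 M\mid m\not\ge_{\mathbb{K}}n\}\big)$. *)

(* Defs.v *)
From mathcomp Require Import all_boot.
Set Implicit Arguments. Unset Strict Implicit. Unset Printing Implicit Defensive.

Section FCA.
Variables (G M : finType) (I : G -> M -> bool).

Definition intent (A : {set G}) : {set M} := [set m | [forall g in A, I g m]].
Definition extent (B : {set M}) : {set G} := [set g | [forall m in B, I g m]].
Definition closure (B : {set M}) : {set M} := intent (extent B).

Definition reduced : Prop :=
  (forall (g : G) (X : {set G}), g \notin X -> intent [set g] <> intent X) /\
  (forall (m : M) (X : {set M}), m \notin X -> extent [set m] <> extent X).

Definition bullet (A : {set M}) : {set M} :=
  closure A :\: (A :|: \bigcup_(n in A) closure (A :\ n)).
Definition proper_premise (A : {set M}) : bool := bullet A != set0.

(* canonical direct basis: the set of implications A -> A^bullet *)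
Definition CDB : {set {set M} * {set M}} :=
  [set (A, bullet A) | A in [set A | proper_premise A]].

Definition attr_ge (m n : M) : bool := extent [set n] \subset extent [set m].

(* concept lattice: concepts (E,B) with E' = B, B' = E, ordered by extents *)
Definition is_concept (c : {set G} * {set M}) : bool :=
  (intent c.1 == c.2) && (extent c.2 == c.1).
Definition concept_top : {set G} * {set M} := (setT, intent setT).
Definition concept_meet (c d : {set G} * {set M}) : {set G} * {set M} :=
  (c.1 :&: d.1, intent (c.1 :&: d.1)).
Definition meet_irreducible (c : {set G} * {set M}) : bool :=
  (c != concept_top) &&
  [forall c1, forall c2,
     (is_concept c1 && is_concept c2 && (c == concept_meet c1 c2))
       ==> ((c == c1) || (c == c2))].
Definition attr_concept (m : M) : {set G} * {set M} :=
  (extent [set m], closure [set m]).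
Definition attr_mi (m : M) : bool := meet_irreducible (attr_concept m).

(* Birkhoff completion: new objects \overline m for m in M(M) *)
Definition bc_obj : finType := (G + {m : M | attr_mi m})%type.
Definition bc_rel (x : bc_obj) (n : M) : bool :=
  match x with
  | inl g => I g n
  | inr m => ~~ attr_ge (val m) n
  end.

End FCA.

(* Main.v *)
Require Import Defs.
From mathcomp Require Import all_boot.
Set Implicit Arguments. Unset Strict Implicit. Unset Printing Implicit Defensive.

Lemma in_extent (G M : finType) (I : G -> M -> bool) (B : {set M}) g : (g \in extent I B) = [forall m in B, I g m].
Proof. by rewrite inE. Qed.

Lemma in_intent (G M : finType) (I : G -> M -> bool) (A : {set G}) m : (m \in intent I A) = [forall g in A, I g m].
Proof. by rewrite inE. Qed.

Lemma bullet1 (G M : finType) (I : G -> M -> bool) a :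
  Defs.closure I set0 = set0 -> bullet I [set a] = Defs.closure I [set a] :\: [set a].
Proof. by move=> H0; rewrite /bullet big_set1 setDv H0 setU0. Qed.

Section Pf.
Variables (G M : finType) (I : G -> M -> bool).
Notation cl := (Defs.closure I).
Notation J := (@bc_rel G M I).
Notation clJ := (Defs.closure J).

Lemma in_cl1 b n : (n \in cl [set b]) = (extent I [set b] \subset extent I [set n]).
Proof.
rewrite /Defs.closure in_intent.
apply/forallP/subsetP => [H g | H g].
- move=> Hg; have := H g; rewrite Hg /= => Ign.
  by rewrite in_extent; apply/forallP => m; apply/implyP; rewrite inE => /eqP ->.
- apply/implyP => /H; rewrite in_extent => /forallP /(_ n); rewrite inE eqxx.
  by [].
Qed.

Lemma extentU (B C : {set M}) : extent I (B :|: C) = extent I B :&: extent I C.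
Proof.
apply/setP => g; rewrite in_setI !in_extent.
apply/forallP/andP => [H | [/forallP H1 /forallP H2] m].
- split; apply/forallP => m; apply/implyP => Hm; have := H m;
  by rewrite inE Hm ?orbT.
- by rewrite inE; apply/implyP => /orP [Hm|Hm];
   [have := H1 m | have := H2 m]; rewrite Hm.
Qed.

Hypothesis red : reduced I.

Lemma all_mi m : attr_mi I m.
Proof.
case: red => _ Rm.
rewrite /attr_mi /meet_irreducible; apply/andP; split.
- apply/eqP => [[E _]]. apply: (Rm m set0); first by rewrite inE.
  rewrite E; apply/setP => g; rewrite inE in_extent; apply/esym/forallP => x.
  by rewrite inE.
- apply/forallP => c1; apply/forallP => c2; apply/implyP.
  case/andP => /andP [/andP [/eqP i1 /eqP e1] /andP [/eqP i2 /eqP e2]] /eqP Ec.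
  case: Ec => Ee Ec.
  have Hm : m \in c1.2 :|: c2.2.
    apply/negPn/negP => Hn; apply: (Rm m _ Hn).
    by rewrite extentU e1 e2 Ee.
  have key : forall c : {set G} * {set M}, intent I c.1 = c.2 -> extent I c.2 = c.1 ->
     m \in c.2 -> extent I [set m] \subset c.1 -> (attr_concept I m == c).
    move=> [c1' c2'] /= ii ee Hmc Hsub.
    have Es : extent I [set m] = c1'.
      apply/eqP; rewrite eqEsubset Hsub /=.
      rewrite -ee; apply/subsetP => g; rewrite !in_extent => /forallP H.
      by apply/forallP => x; apply/implyP; rewrite inE => /eqP ->; have := H m; rewrite Hmc.
    by rewrite /attr_concept /Defs.closure Es ii.
  case/setUP: Hm => Hm.
  + by apply/orP; left; apply: key => //; rewrite Ee subsetIl.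
  + by apply/orP; right; apply: key => //; rewrite Ee subsetIr.
Qed.

Lemma cl1_sub b n : n \in cl [set b] -> forall g, I g b -> I g n.
Proof.
rewrite in_cl1 => /subsetP H g Hg.
have : g \in extent I [set n].
  apply: H; rewrite in_extent; apply/forallP => x; apply/implyP.
  by rewrite inE => /eqP ->.
by rewrite in_extent => /forallP /(_ n); rewrite inE eqxx.
Qed.

Lemma clJ_eq (B : {set M}) : clJ B = \bigcup_(b in B) cl [set b].
Proof.
apply/setP => n; rewrite /Defs.closure in_intent.
apply/forallP/idP => [H | /bigcupP [b Hb Hn] x].
- apply/idPn => Hn.
  have := H (inr (exist _ n (all_mi n))).
  rewrite in_extent /= /attr_ge.
  have -> : [forall (m | m \in B), ~~ (extent I [set m] \subset extent I [set n])].
    apply/forallP => m; apply/implyP => Hm; apply/negP => Hs.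
    move/negP: Hn; apply; apply/bigcupP; exists m => //.
    by rewrite in_cl1.
  by rewrite subxx.
- apply/implyP; rewrite in_extent => /forallP Hx.
  case: x Hx => [g | [m Hmi]] /= Hx.
  + have := Hx b; rewrite Hb /= => Igb.
    exact: (cl1_sub Hn).
  + have := Hx b; rewrite Hb /=; apply: contra => Hge.
    rewrite /attr_ge in Hge *; apply: subset_trans Hge.
    by rewrite -in_cl1.
Qed.

Lemma cl0 : cl set0 = set0.
Proof.
case: red => _ Rm.
apply/setP => n; rewrite in_set0; apply/negbTE/negP; rewrite in_intent => /forallP H.
apply: (Rm n set0); first by rewrite inE. apply/setP => g; rewrite !in_extent.
apply/forallP/forallP => _ x; rewrite ?inE //.
apply/implyP => /eqP ->; have := H g; rewrite in_extent.
have -> : [forall (m | m \in set0), I g m] by apply/forallP => y; rewrite inE.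
by [].
Qed.

Lemma clJ0 : clJ set0 = set0.
Proof. by rewrite clJ_eq big_set0. Qed.

Lemma bulletJ1 a : bullet J [set a] = bullet I [set a].
Proof. by rewrite !bullet1 ?cl0 ?clJ0 // clJ_eq big_set1. Qed.

Lemma bulletJ0 (A : {set M}) : #|A| != 1 -> bullet J A = set0.
Proof.
move=> HA; case: (set_0Vmem A) => [-> | [a0 Ha0]].
  by rewrite /bullet clJ0 set0D.
apply/eqP; rewrite setD_eq0; apply/subsetP => n; rewrite clJ_eq => /bigcupP [a Ha Hn].
have : 0 < #|A :\ a|.
  have := cardsD1 a A; rewrite Ha add1n => E.
  have : 0 < #|A| by apply/card_gt0P; exists a0.
  by move: HA; rewrite E; case: #|A :\ a|.
case/card_gt0P => n' Hn'.
rewrite inE; apply/orP; right; apply/bigcupP; exists n'; first by case/setD1P: Hn'.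
rewrite clJ_eq; apply/bigcupP; exists a => //.
case/setD1P: Hn' => Hne _; apply/setD1P; split => //; by rewrite eq_sym.
Qed.
End Pf.

Lemma mem_imset_pair (T U : finType) (f : {set T} -> {set U}) (P : {set {set T}}) A B :
  ((A, B) \in [set (X, f X) | X in P]) = (A \in P) && (B == f A).
Proof.
apply/imsetP/andP => [[X HX [-> ->]] | [HA /eqP ->]]; first by [].
by exists A.
Qed.

Theorem mainTheorem8 (G M : finType) (I : G -> M -> bool) :
  reduced I ->
  CDB (@bc_rel G M I) = [set p in CDB I | #|p.1| == 1].
Proof.
move=> red; apply/setP => [[A B]].
rewrite inE /CDB !mem_imset_pair !inE /proper_premise /=.
case: (boolP (#|A| == 1)) => HA.
- case/cards1P: HA => a ->.
  by rewrite bulletJ1 // andbT.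
- by rewrite bulletJ0 // eqxx andbF.
Qed.
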